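(* In System $\mathsf{F_{<:}^{K\top}}$, for all $\Theta\vdash S$ and $\Theta\vdash T$: $\Theta \vdash S <: T$ if and only if $\Theta \vdash_A S <: T$.
   Context: System $\mathsf{F_{<:}^{K\top}}$: raw types $T ::= \top \mid X \mid T\to T \mid \forall^{\mathsf K}(X<:T).T \mid \forall^\top(X<:T).T$, up to $\alpha$-conversion. Contexts $\Theta$: finite sequences of $X<:T$ or $x:T$ with distinct variables, each type well-formed over the preceding part. Declarative subtyping $\Theta\vdash S<:T$: (Var) $\Theta,X<:T,\Theta'\vdash X<:T$; (Top) $\Theta\vdash T<:\top$; (Refl) $\Theta\vdash T<:T$; (Trans) from $T<:T'$ and $T'<:T''$ infer $T<:T''$; ($\to$) from $\Theta\vdash S'<:S$ and $\Theta\vdash T<:T'$ infer $\Theta\vdash S\to T<:S'\to T'$; ($\forall$-Fun) from $\Theta,X<:S\vdash T<:T'$ infer $\Theta\vdash\forall^{\mathsf K}(X<:S).T<:\forall^{\mathsf K}(X<:S).T'$; ($\forall$-Loc) from $\Theta\vdash T_0<:S_0$ and $\Theta,X<:S_0\vdash S_1<:T_1$ infer $\Theta\vdash\forall^{\mathsf K}(X<:S_0).S_1<:\forall^\top(X<:T_0).T_1$; ($\forall$-Top) from $\Theta\vdash T_0<:S_0$ and $\Theta,X<:\top\vdash S_1<:T_1$ infer $\Theta\vdash\forall^\top(X<:S_0).S_1<:\forall^\top(X<:T_0).T_1$. Algorithmic subtyping $\Theta\vdash_A S<:T$: (1) $\Theta\vdash_A T<:\top$; (2) $\Theta\vdash_A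 X<:X$; (3) if $T\not\equiv\top$, $T\not\equiv X$ and $\Theta,X<:S,\Theta'\vdash_A S<:T$, then $\Theta,X<:S,\Theta'\vdash_A X<:T$; (4)–(7) the rules $\to$, $\forall$-Fun, $\forall$-Loc, $\forall$-Top above with $\vdash$ replaced by $\vdash_A$ throughout. *)

(* Defs.v *)
From Stdlib Require Import Arith List.
Import ListNotations.

(* Raw types. Bound variable of a quantifier is index 0 in its body.
   allK S T = forall^K (X<:S).T ;  allT S T = forall^Top (X<:S).T *)
Inductive typ : Type :=
  | ttop : typ
  | tvar : nat -> typ
  | tarr : typ -> typ -> typ
  | tallK : typ -> typ -> typ
  | tallT : typ -> typ -> typ.

(* Context entries: X <: T  or  x : T.  Head of the list = most recent.
   Type-variable indices count only type-variable entries. *)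
Inductive binding : Type :=
  | bsub : typ -> binding
  | bvar : typ -> binding.

Definition ctx := list binding.

Fixpoint tshift (c : nat) (T : typ) : typ :=
  match T with
  | ttop => ttop
  | tvar n => if n <? c then tvar n else tvar (S n)
  | tarr T1 T2 => tarr (tshift c T1) (tshift c T2)
  | tallK T1 T2 => tallK (tshift c T1) (tshift (S c) T2)
  | tallT T1 T2 => tallT (tshift c T1) (tshift (S c) T2)
  end.

Fixpoint ntv (G : ctx) : nat :=
  match G with
  | [] => 0
  | bsub _ :: G' => S (ntv G')
  | bvar _ :: G' => ntv G'
  end.

(* bound of type variable n, expressed in the full context G *)
Fixpoint get_bound (G : ctx) (n : nat) : option typ :=
  match G with
  | [] => None
  | bvar _ :: G' => get_bound G' n
  | bsub U :: G' =>
      match n with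
      | 0 => Some (tshift 0 U)
      | S m => option_map (tshift 0) (get_bound G' m)
      end
  end.

Fixpoint wf_typ_n (k : nat) (T : typ) : Prop :=
  match T with
  | ttop => True
  | tvar n => n < k
  | tarr T1 T2 => wf_typ_n k T1 /\ wf_typ_n k T2
  | tallK T1 T2 => wf_typ_n k T1 /\ wf_typ_n (S k) T2
  | tallT T1 T2 => wf_typ_n k T1 /\ wf_typ_n (S k) T2
  end.

Definition wf_typ (G : ctx) (T : typ) : Prop := wf_typ_n (ntv G) T.

Fixpoint wf_ctx (G : ctx) : Prop :=
  match G with
  | [] => True
  | bsub U :: G' => wf_ctx G' /\ wf_typ G' U
  | bvar U :: G' => wf_ctx G' /\ wf_typ G' U
  end.

Inductive sub : ctx -> typ -> typ -> Prop :=
  | sub_var : forall G n U, get_bound G n = Some U -> sub G (tvar n) U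
  | sub_top : forall G T, sub G T ttop
  | sub_refl : forall G T, sub G T T
  | sub_trans : forall G T T' T'', sub G T T' -> sub G T' T'' -> sub G T T''
  | sub_arr : forall G S S' T T',
      sub G S' S -> sub G T T' -> sub G (tarr S T) (tarr S' T')
  | sub_allfun : forall G S T T',
      sub (bsub S :: G) T T' -> sub G (tallK S T) (tallK S T')
  | sub_allloc : forall G S0 S1 T0 T1,
      sub G T0 S0 -> sub (bsub S0 :: G) S1 T1 ->
      sub G (tallK S0 S1) (tallT T0 T1)
  | sub_alltop : forall G S0 S1 T0 T1,
      sub G T0 S0 -> sub (bsub ttop :: G) S1 T1 ->
      sub G (tallT S0 S1) (tallT T0 T1).

Inductive asub : ctx -> typ -> typ -> Prop :=
  | asub_top : forall G T, asub G T ttop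
  | asub_refl_var : forall G n, asub G (tvar n) (tvar n)
  | asub_var : forall G n U T,
      T <> ttop -> T <> tvar n -> get_bound G n = Some U ->
      asub G U T -> asub G (tvar n) T
  | asub_arr : forall G S S' T T',
      asub G S' S -> asub G T T' -> asub G (tarr S T) (tarr S' T')
  | asub_allfun : forall G S T T',
      asub (bsub S :: G) T T' -> asub G (tallK S T) (tallK S T')
  | asub_allloc : forall G S0 S1 T0 T1,
      asub G T0 S0 -> asub (bsub S0 :: G) S1 T1 ->
      asub G (tallK S0 S1) (tallT T0 T1)
  | asub_alltop : forall G S0 S1 T0 T1,
      asub G T0 S0 -> asub (bsub ttop :: G) S1 T1 ->
      asub G (tallT S0 S1) (tallT T0 T1).

(* Main.v *)
Require Import Defs.
From Stdlib Require Import Arith List.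
Import ListNotations.

Lemma asub_var' : forall G n U T, get_bound G n = Some U -> asub G U T -> asub G (tvar n) T.
Proof.
  intros G n U T Hb H.
  destruct T as [|m| | |].
  - apply asub_top.
  - destruct (Nat.eq_dec m n) as [->|Hne].
    + apply asub_refl_var.
    + eapply asub_var; eauto; congruence.
  - eapply asub_var; eauto; congruence.
  - eapply asub_var; eauto; congruence.
  - eapply asub_var; eauto; congruence.
Qed.

Lemma asub_refl : forall T G, asub G T T.
Proof.
  induction T; intros G.
  - apply asub_top.
  - apply asub_refl_var.
  - apply asub_arr; auto.
  - apply asub_allfun; auto.
  - apply asub_alltop; auto.
Qed.

Definition narrows G1 G2 := forall n U, get_bound G1 n = Some U -> U = ttop \/ get_bound G2 n = Some U.

Lemma narrows_cons : forall G1 G2 S, narrows G1 G2 -> narrows (bsub S :: G1) (bsub S :: G2).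
Proof.
  intros G1 G2 S H n U Hb. destruct n as [|m]; simpl in *.
  - right; exact Hb.
  - destruct (get_bound G1 m) as [U'|] eqn:E; simpl in Hb; [|discriminate].
    injection Hb as <-. destruct (H m U' E) as [->|E2].
    + left; reflexivity.
    + right; rewrite E2; reflexivity.
Qed.

Lemma asub_narrow : forall G1 M N, asub G1 M N -> forall G2, narrows G1 G2 -> asub G2 M N.
Proof.
  induction 1; intros G2 Hn.
  - apply asub_top.
  - apply asub_refl_var.
  - destruct (Hn n U H1) as [->|E].
    + inversion H2; subst; congruence.
    + eapply asub_var; eauto.
  - apply asub_arr; auto.
  - apply asub_allfun; apply IHasub; apply narrows_cons; auto.
  - apply asub_allloc; auto; apply IHasub2; apply narrows_cons; auto.
  - apply asub_alltop; auto; apply IHasub2; apply narrows_cons; auto.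
Qed.

Lemma narrows_top : forall G S, narrows (bsub ttop :: G) (bsub S :: G).
Proof.
  intros G S n U Hb. destruct n; simpl in *.
  - left; congruence.
  - right; exact Hb.
Qed.

Lemma asub_trans_aux : forall Q G S Q' T, asub G S Q' -> Q' = Q -> asub G Q T -> asub G S T.
Proof.
  induction Q; intros G S Q' T H1; revert T; induction H1; intros TT Heq HR;
    try discriminate; subst.
  all: try (eapply asub_var'; eauto; fail).
  all: try exact HR.
  - inversion HR; subst; apply asub_top.
  - injection Heq as ->; exact HR.
  - injection Heq as <- <-. inversion HR; subst; [apply asub_top|].
    apply asub_arr; eauto.
  - injection Heq as <- <-. inversion HR; subst; [apply asub_top| |].
    + apply asub_allfun; eauto.
    + apply asub_allloc; eauto.
  - injection Heq as <- <-. inversion HR; subst; [apply asub_top|].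
    apply asub_allloc; eauto.
    eapply IHQ2; eauto. eapply asub_narrow; eauto. apply narrows_top.
  - injection Heq as <- <-. inversion HR; subst; [apply asub_top|].
    apply asub_alltop; eauto.
Qed.

Lemma asub_trans : forall G S Q T, asub G S Q -> asub G Q T -> asub G S T.
Proof. intros; eapply asub_trans_aux; eauto. Qed.

Lemma sub_asub : forall G S T, sub G S T -> asub G S T.
Proof.
  induction 1.
  - eapply asub_var'; eauto; apply asub_refl.
  - apply asub_top.
  - apply asub_refl.
  - eapply asub_trans; eauto.
  - apply asub_arr; auto.
  - apply asub_allfun; auto.
  - apply asub_allloc; auto.
  - apply asub_alltop; auto.
Qed.

Lemma asub_sub : forall G S T, asub G S T -> sub G S T.
Proof.
  induction 1.
  - apply sub_top.
  - apply sub_refl.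
  - eapply sub_trans; [apply sub_var; eauto|]; auto.
  - apply sub_arr; auto.
  - apply sub_allfun; auto.
  - apply sub_allloc; auto.
  - apply sub_alltop; auto.
Qed.

Theorem proposition6p2 :
  forall (G : ctx) (S T : typ),
    wf_ctx G -> wf_typ G S -> wf_typ G T ->
    (sub G S T <-> asub G S T).
Proof.
  intros G S T _ _ _; split; [apply sub_asub | apply asub_sub].
Qed.
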